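(* Let $p\in(0,1)$, $a>a_*:=p^p(1-p)^{1-p}$, and let $\gamma_a:\mathbb{R}\to\mathbb{S}^2$ be a $p$-elastic curve with non-constant curvature $\kappa$ satisfying the first integral with constant $a$ (so $\kappa$ is periodic with some minimal period $\varrho=\varrho(a)>0$). Then $\gamma_a$ is a closed curve if and only if $$\Lambda_p(a):=(1-p)\sqrt{a}\int_0^{\varrho}\frac{\kappa^{2-p}}{a\,\kappa^{2(1-p)}-p^2}\,ds=2\pi q$$ for some rational number $q$.
   Context: $\mathbb{S}^2$ is the unit sphere in $\mathbb{R}^3$. For an immersed arc-length parametrized curve $\gamma$ in $\mathbb{S}^2$, $T=\gamma'$, $N$ is the rotation of $T$ by $+\pi/2$ in the tangent plane, and the geodesic curvature $\kappa$ is defined by $\nabla_T T=\kappa N$. For $p\in(0,1)$, $\mathbf{\Theta}_p(\gamma)=\int_\gamma\kappa^p\,ds$ acts on convex curves ($\kappa>0$), and a $p$-elastic curve is a convex curve whose curvature satisfies $p\,(\kappa^{p-1})''+(p-1)\kappa^{p+1}+p\,\kappa^{p-1}=0$. A $p$-elastic curve with non-constant curvature satisfies, for a constant $a$, the first integral $p^2(p-1)^2\kappa^{2(p-2)}(\kappa')^2+(p-1)^2\kappa^{2p}+p^2\kappa^{2(p-1)}=a$; for $p\in(0,1)$ non-constant solutions require $a>a_*$, and such curves are defined on all of $\mathbb{R}$ with periodic curvature. *)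

(* Defs.v *)
From Stdlib Require Import Reals QArith Qreals.
From Coquelicot Require Import Coquelicot.
Open Scope R_scope.

Definition v3 : Type := (R * R * R)%type.
Definition cx (v : v3) : R := fst (fst v).
Definition cy (v : v3) : R := snd (fst v).
Definition cz (v : v3) : R := snd v.

Definition dot (u v : v3) : R := cx u * cx v + cy u * cy v + cz u * cz v.
Definition cross (u v : v3) : v3 :=
  (cy u * cz v - cz u * cy v, cz u * cx v - cx u * cz v, cx u * cy v - cy u * cx v).

Definition dcurve (g : R -> v3) : R -> v3 :=
  fun s => (Derive (fun t => cx (g t)) s,
            Derive (fun t => cy (g t)) s,
            Derive (fun t => cz (g t)) s).

Definition smooth_curve (g : R -> v3) : Prop :=
  forall (n : nat) (s : R),
    ex_derive (Derive_n (fun t => cx (g t)) n) s /\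
    ex_derive (Derive_n (fun t => cy (g t)) n) s /\
    ex_derive (Derive_n (fun t => cz (g t)) n) s.

Definition on_sphere (g : R -> v3) : Prop := forall s, dot (g s) (g s) = 1.

Definition arclength (g : R -> v3) : Prop :=
  forall s, dot (dcurve g s) (dcurve g s) = 1.

(* T = gamma', N = rotation of T by +pi/2 in T_gamma S^2 (outward orientation):
   N = gamma x T. *)
Definition tangent (g : R -> v3) : R -> v3 := dcurve g.
Definition normal (g : R -> v3) : R -> v3 := fun s => cross (g s) (tangent g s).

(* Geodesic curvature: nabla_T T = (tangential part of gamma'') = kappa N,
   so kappa = <gamma'', N> (gamma'' - its tangential part is normal to S^2,
   hence orthogonal to N). *)
Definition geod_curv (g : R -> v3) : R -> R :=
  fun s => dot (dcurve (dcurve g) s) (normal g s).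

Definition convex_curve (g : R -> v3) : Prop := forall s, 0 < geod_curv g s.

Definition p_elastic (p : R) (g : R -> v3) : Prop :=
  smooth_curve g /\ on_sphere g /\ arclength g /\ convex_curve g /\
  forall s,
    p * Derive_n (fun t => Rpower (geod_curv g t) (p - 1)) 2 s
    + (p - 1) * Rpower (geod_curv g s) (p + 1)
    + p * Rpower (geod_curv g s) (p - 1) = 0.

Definition first_integral (p a : R) (k : R -> R) : Prop :=
  forall s,
    p ^ 2 * (p - 1) ^ 2 * Rpower (k s) (2 * (p - 2)) * (Derive k s) ^ 2
    + (p - 1) ^ 2 * Rpower (k s) (2 * p)
    + p ^ 2 * Rpower (k s) (2 * (p - 1)) = a.

Definition minimal_period (f : R -> R) (rho : R) : Prop :=
  0 < rho /\ (forall s, f (s + rho) = f s) /\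
  (forall t, 0 < t < rho -> exists s, f (s + t) <> f s).

Definition closed_curve (g : R -> v3) : Prop :=
  exists L, 0 < L /\ forall s, g (s + L) = g s.

Definition a_star (p : R) : R := Rpower p p * Rpower (1 - p) (1 - p).

Definition Lambda (p a rho : R) (k : R -> R) : R :=
  (1 - p) * sqrt a *
  RInt (fun s => Rpower (k s) (2 - p) / (a * Rpower (k s) (2 * (1 - p)) - p ^ 2)) 0 rho.

(* Main.v *)
Require Import Defs.
From Stdlib Require Import Reals QArith Qreals Lra Lia FunctionalExtensionality.
From Coquelicot Require Import Coquelicot.
Open Scope R_scope.

Fixpoint Ck (n : nat) (f : R -> R) : Prop :=
  match n with O => True | S n => (forall x, ex_derive f x) /\ Ck n (Derive f) end.
Definition Cinf (f : R -> R) := forall n, Ck n f.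

Lemma Ck_ext n f g : (forall x, f x = g x) -> Ck n f -> Ck n g.
Proof. intros H; replace g with f; auto. apply functional_extensionality; auto. Qed.

Lemma Ck_down n : forall f, Ck (S n) f -> Ck n f.
Proof. induction n; intros f H; simpl in *; auto. destruct H; split; auto. Qed.

Lemma isd_plus f g s a b : is_derive f s a -> is_derive g s b -> is_derive (fun t => f t + g t) s (a + b).
Proof. intros; apply (is_derive_plus f g); auto. Qed.
Lemma isd_minus f g s a b : is_derive f s a -> is_derive g s b -> is_derive (fun t => f t - g t) s (a - b).
Proof. intros; apply (is_derive_minus f g); auto. Qed.
Lemma isd_mult f g s a b : is_derive f s a -> is_derive g s b -> is_derive (fun t => f t * g t) s (a * g s + f s * b).
Proof. intros; apply (is_derive_mult f g); auto. intros; apply Rmult_comm. Qed.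
Lemma isd_const (c s : R) : is_derive (fun _ : R => c) s 0.
Proof. apply (is_derive_const c). Qed.
Lemma isd_val (f : R -> R) (s a b : R) : is_derive f s a -> a = b -> is_derive f s b.
Proof. intros H ->; auto. Qed.
Lemma isd_ext (f g : R -> R) (s a : R) : (forall t, f t = g t) -> is_derive f s a -> is_derive g s a.
Proof. intros; eapply is_derive_ext; eauto. Qed.

Lemma Derive_plus' f g : (forall x, ex_derive f x) -> (forall x, ex_derive g x) ->
  Derive (fun t => f t + g t) = fun t => Derive f t + Derive g t.
Proof. intros; apply functional_extensionality; intros; apply Derive_plus; auto. Qed.
Lemma Derive_mult' f g : (forall x, ex_derive f x) -> (forall x, ex_derive g x) ->
  Derive (fun t => f t * g t) = fun t => Derive f t * g t + f t * Derive g t.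
Proof. intros; apply functional_extensionality; intros; apply Derive_mult; auto. Qed.

Lemma Ck_plus n : forall f g, Ck n f -> Ck n g -> Ck n (fun t => f t + g t).
Proof.
  induction n; intros f g Hf Hg; simpl in *; auto. destruct Hf, Hg. split.
  - intros; apply (ex_derive_plus f g); auto.
  - rewrite Derive_plus'; auto.
Qed.
Lemma Ck_mult n : forall f g, Ck n f -> Ck n g -> Ck n (fun t => f t * g t).
Proof.
  induction n; intros f g Hf Hg; simpl; auto.
  pose proof (Ck_down _ _ Hf) as Hf'. pose proof (Ck_down _ _ Hg) as Hg'.
  destruct Hf as [Ef Df], Hg as [Eg Dg]. split.
  - intros; apply (ex_derive_mult f g); auto.
  - rewrite Derive_mult'; auto. apply Ck_plus; apply IHn; auto.
Qed.
Lemma Ck_const n c : Ck n (fun _ => c).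
Proof.
  revert c; induction n; intros; simpl; auto. split.
  - intros; apply ex_derive_const.
  - replace (Derive (fun _ => c)) with (fun _ : R => 0); auto.
    apply functional_extensionality; intros; rewrite Derive_const; auto.
Qed.

Lemma Cinf_plus f g : Cinf f -> Cinf g -> Cinf (fun t => f t + g t).
Proof. intros ? ? n; apply Ck_plus; auto. Qed.
Lemma Cinf_mult f g : Cinf f -> Cinf g -> Cinf (fun t => f t * g t).
Proof. intros ? ? n; apply Ck_mult; auto. Qed.
Lemma Cinf_ext f g : (forall x, f x = g x) -> Cinf f -> Cinf g.
Proof. intros ? ? n; eapply Ck_ext; eauto. Qed.
Lemma Cinf_minus f g : Cinf f -> Cinf g -> Cinf (fun t => f t - g t).
Proof. intros. apply (Cinf_ext (fun t => f t + (-1) * g t)); [intros; ring|].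
  apply Cinf_plus; auto. apply Cinf_mult; auto. intro; apply Ck_const. Qed.
Lemma Cinf_Derive f : Cinf f -> Cinf (Derive f).
Proof. intros H n. apply (H (S n)). Qed.
Lemma Cinf_ex f x : Cinf f -> ex_derive f x.
Proof. intros H. apply (H 1%nat). Qed.

Lemma Derive_n_Derive f m x : Derive_n (Derive f) m x = Derive_n f (S m) x.
Proof.
  revert x; induction m; intros; simpl; auto.
  apply Derive_ext; intros; apply IHm.
Qed.

Lemma Ck_of_Dn n : forall f, (forall m x, ex_derive (Derive_n f m) x) -> Ck n f.
Proof.
  induction n; intros f H; simpl; auto. split.
  - intros; apply (H O).
  - apply IHn. intros m x.
    eapply ex_derive_ext; [|apply (H (S m) x)].
    intros; symmetry; apply Derive_n_Derive.
Qed.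

Definition vadd (u v : v3) : v3 := (cx u + cx v, cy u + cy v, cz u + cz v).
Definition vsc (c : R) (u : v3) : v3 := (c * cx u, c * cy u, c * cz u).
Definition vsub (u v : v3) : v3 := (cx u - cx v, cy u - cy v, cz u - cz v).
Definition v0 : v3 := (0, 0, 0).
Definition comb3 (c1 : R) (a : v3) (c2 : R) (b : v3) (c3 : R) (n : v3) : v3 :=
  vadd (vadd (vsc c1 a) (vsc c2 b)) (vsc c3 n).

Ltac vdes := repeat match goal with | u : v3 |- _ => let a := fresh "a" in let b := fresh "b" in let c := fresh "c" in destruct u as [[a b] c] end;
  unfold comb3, vadd, vsc, vsub, v0, dot, cross, cx, cy, cz in *; simpl in *.
Ltac veq := vdes; match goal with |- (_,_,_) = _ => f_equal; [f_equal|] | _ => idtac end; ring.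

Lemma v3_ext (u v : v3) : cx u = cx v -> cy u = cy v -> cz u = cz v -> u = v.
Proof. destruct u as [[? ?] ?], v as [[? ?] ?]; unfold cx, cy, cz; simpl; intros; subst; auto. Qed.

Lemma dot_comb3 c1 a c2 b c3 n x : dot (comb3 c1 a c2 b c3 n) x = c1 * dot a x + c2 * dot b x + c3 * dot n x.
Proof. veq. Qed.
Lemma dot_comb3_r c1 a c2 b c3 n x : dot x (comb3 c1 a c2 b c3 n) = c1 * dot x a + c2 * dot x b + c3 * dot x n.
Proof. veq. Qed.
Lemma dot_sym u v : dot u v = dot v u. Proof. veq. Qed.
Lemma dot_vsub u v x : dot (vsub u v) x = dot u x - dot v x. Proof. veq. Qed.
Lemma dot_vsc c u x : dot (vsc c u) x = c * dot u x. Proof. veq. Qed.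
Lemma dot_vadd u v x : dot (vadd u v) x = dot u x + dot v x. Proof. veq. Qed.
Lemma cross_dot_l a b : dot (cross a b) a = 0. Proof. veq. Qed.
Lemma cross_dot_r a b : dot (cross a b) b = 0. Proof. veq. Qed.
Lemma lagrange a b : dot (cross a b) (cross a b) = dot a a * dot b b - dot a b ^ 2. Proof. veq. Qed.
Lemma bac a b w : cross (cross a b) w = vadd (vsc (dot a w) b) (vsc (- dot b w) a). Proof. veq. Qed.
Lemma abc a b c : cross a (cross b c) = vsub (vsc (dot a c) b) (vsc (dot a b) c). Proof. veq. Qed.
Lemma triple_same w e : dot w (cross e w) = 0. Proof. veq. Qed.
Lemma dot_self_0 w : dot w w = 0 -> w = v0.
Proof. vdes. intros H. assert (a = 0) by nra. assert (b = 0) by nra. assert (c = 0) by nra. subst; auto. Qed.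

Lemma decomp a b v : dot a a = 1 -> dot b b = 1 -> dot a b = 0 ->
  v = comb3 (dot v a) a (dot v b) b (dot v (cross a b)) (cross a b).
Proof.
  intros Ha Hb Hab.
  set (n := cross a b).
  assert (Hnn : dot n n = 1) by (unfold n; rewrite lagrange, Ha, Hb, Hab; ring).
  assert (Hna : dot n a = 0) by apply cross_dot_l.
  assert (Hnb : dot n b = 0) by apply cross_dot_r.
  set (W := vsub v (comb3 (dot v a) a (dot v b) b (dot v n) n)).
  assert (Wa : dot W a = 0).
  { unfold W; rewrite dot_vsub, dot_comb3. rewrite Ha, (dot_sym b a), Hab, Hna. ring. }
  assert (Wb : dot W b = 0).
  { unfold W; rewrite dot_vsub, dot_comb3. rewrite Hb, Hab, Hnb. ring. }
  assert (Wn : dot W n = 0).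
  { unfold W; rewrite dot_vsub, dot_comb3. rewrite Hnn, (dot_sym a n), Hna, (dot_sym b n), Hnb. ring. }
  assert (HW : dot W W = 0).
  { pose proof (lagrange n W) as L. rewrite Hnn, (dot_sym n W), Wn in L.
    unfold n in L at 1 2. rewrite !bac in L.
    rewrite (dot_sym a W), Wa, (dot_sym b W), Wb in L.
    replace (vadd (vsc 0 b) (vsc (- 0) a)) with v0 in L by veq.
    assert (E0 : dot v0 v0 = 0) by (unfold dot, v0, cx, cy, cz; simpl; ring). rewrite E0 in L. lra. }
  apply dot_self_0 in HW. unfold W in HW.
  apply v3_ext; unfold vsub, v0 in HW; injection HW; intros; simpl; lra.
Qed.

Ltac rring := simpl; match goal with |- ?x = ?y => change (@eq R x y) end; ring.

Definition vder (V W : R -> v3) := forall s,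
  is_derive (fun t => cx (V t)) s (cx (W s)) /\ is_derive (fun t => cy (V t)) s (cy (W s)) /\
  is_derive (fun t => cz (V t)) s (cz (W s)).

Lemma vder_dot U U' V V' s : vder U U' -> vder V V' ->
  is_derive (fun t => dot (U t) (V t)) s (dot (U' s) (V s) + dot (U s) (V' s)).
Proof.
  intros HU HV. destruct (HU s) as [U1 [U2 U3]], (HV s) as [V1 [V2 V3]].
  unfold dot. eapply isd_val.
  - apply isd_plus; [apply isd_plus|]; apply isd_mult; eauto.
  - rring.
Qed.

Lemma vder_cross U U' V V' : vder U U' -> vder V V' ->
  vder (fun t => cross (U t) (V t)) (fun s => vadd (cross (U' s) (V s)) (cross (U s) (V' s))).
Proof.
  intros HU HV s. destruct (HU s) as [U1 [U2 U3]], (HV s) as [V1 [V2 V3]].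
  unfold cross, vadd, cx, cy, cz in *; simpl.
  split; [|split]; (eapply isd_val; [apply isd_minus; apply isd_mult; eauto|rring]).
Qed.

Lemma vder_sc f f' V V' : (forall s, is_derive f s (f' s)) -> vder V V' ->
  vder (fun t => vsc (f t) (V t)) (fun s => vadd (vsc (f' s) (V s)) (vsc (f s) (V' s))).
Proof.
  intros Hf HV s. destruct (HV s) as [V1 [V2 V3]].
  unfold vsc, vadd, cx, cy, cz in *; simpl.
  split; [|split]; (eapply isd_val; [apply isd_mult; eauto|rring]).
Qed.

Lemma vder_add U U' V V' : vder U U' -> vder V V' ->
  vder (fun t => vadd (U t) (V t)) (fun s => vadd (U' s) (V' s)).
Proof.
  intros HU HV s. destruct (HU s) as [U1 [U2 U3]], (HV s) as [V1 [V2 V3]].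
  unfold vadd, cx, cy, cz in *; simpl.
  split; [|split]; apply isd_plus; eauto.
Qed.

Lemma vder_sub U U' V V' : vder U U' -> vder V V' ->
  vder (fun t => vsub (U t) (V t)) (fun s => vsub (U' s) (V' s)).
Proof.
  intros HU HV s. destruct (HU s) as [U1 [U2 U3]], (HV s) as [V1 [V2 V3]].
  unfold vsub, cx, cy, cz in *; simpl.
  split; [|split]; apply isd_minus; eauto.
Qed.

Lemma vder_const (c : v3) : vder (fun _ => c) (fun _ => v0).
Proof. intros s; unfold v0, cx, cy, cz; simpl; split; [|split]; apply isd_const. Qed.

Lemma vder_ext_r V W W' : vder V W -> (forall s, W s = W' s) -> vder V W'.
Proof. intros H E s; rewrite <- E; auto. Qed.
Lemma vder_ext_l V V' W : (forall t, V t = V' t) -> vder V W -> vder V' W.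
Proof. intros E H s; destruct (H s) as [A [B C]]; split; [|split]; eapply isd_ext; eauto; intros; simpl; rewrite E; auto. Qed.

Lemma deriv0_const (f : R -> R) : (forall s, is_derive f s 0) -> forall s t, f s = f t.
Proof.
  intros H s t. destruct (Rtotal_order s t) as [Hl|[He|Hl]].
  - apply (eq_is_derive f s t); auto.
  - subst; auto.
  - symmetry; apply (eq_is_derive f t s); auto.
Qed.

Lemma deriv_of_const (f : R -> R) c s l : (forall t, f t = c) -> is_derive f s l -> l = 0.
Proof.
  intros E H. apply is_derive_unique in H. rewrite <- H.
  rewrite (Derive_ext f (fun _ => c)); auto. apply Derive_const.
Qed.

Lemma vder0_const V : vder V (fun _ => v0) -> forall s, V s = V 0.
Proof.
  intros H s. apply v3_ext.
  - apply (deriv0_const (fun t => cx (V t))); intros t; destruct (H t) as [A [B C]]; auto.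
  - apply (deriv0_const (fun t => cy (V t))); intros t; destruct (H t) as [A [B C]]; auto.
  - apply (deriv0_const (fun t => cz (V t))); intros t; destruct (H t) as [A [B C]]; auto.
Qed.

Lemma smooth_Cinf g : smooth_curve g ->
  Cinf (fun t => cx (g t)) /\ Cinf (fun t => cy (g t)) /\ Cinf (fun t => cz (g t)).
Proof.
  intros H. split; [|split]; intros n; apply Ck_of_Dn; intros m x; apply (H m x).
Qed.

Lemma vder_curve g : (forall s, ex_derive (fun t => cx (g t)) s) -> (forall s, ex_derive (fun t => cy (g t)) s) ->
  (forall s, ex_derive (fun t => cz (g t)) s) -> vder g (dcurve g).
Proof.
  intros H1 H2 H3 s. unfold dcurve, cx, cy, cz in *; simpl.
  split; [|split]; apply Derive_correct; auto.
Qed.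

Lemma Cinf_T g : smooth_curve g ->
  Cinf (fun t => cx (dcurve g t)) /\ Cinf (fun t => cy (dcurve g t)) /\ Cinf (fun t => cz (dcurve g t)).
Proof.
  intros H. destruct (smooth_Cinf g H) as [A [B C]].
  unfold dcurve, cx, cy, cz in *; simpl.
  split; [|split]; apply Cinf_Derive; auto.
Qed.

Lemma vder_g g : smooth_curve g -> vder g (dcurve g).
Proof.
  intros H. destruct (smooth_Cinf g H) as [A [B C]].
  apply vder_curve; intros; apply Cinf_ex; auto.
Qed.

Lemma vder_T g : smooth_curve g -> vder (dcurve g) (dcurve (dcurve g)).
Proof.
  intros H. destruct (Cinf_T g H) as [A [B C]].
  apply vder_curve; intros; apply Cinf_ex; auto.
Qed.

Lemma cross_g_comb g T k : dot g g = 1 -> dot g T = 0 ->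
  vadd (cross T T) (cross g (comb3 (-1) g 0 T k (cross g T))) = vsc (- k) T.
Proof.
  intros H1 H2.
  transitivity (vsub (vsc (k * dot g T) g) (vsc (k * dot g g) T)); [veq|].
  rewrite H1, H2. veq.
Qed.

Lemma frame_facts g : smooth_curve g -> on_sphere g -> arclength g -> forall s,
  dot (g s) (dcurve g s) = 0 /\ dot (dcurve g s) (dcurve (dcurve g) s) = 0 /\
  dot (g s) (dcurve (dcurve g) s) = -1.
Proof.
  intros Hs Hsp Hal.
  pose proof (vder_g g Hs) as Dg. pose proof (vder_T g Hs) as DT.
  assert (gT : forall s, dot (g s) (dcurve g s) = 0).
  { intros s. pose proof (vder_dot _ _ _ _ s Dg Dg) as D.
    apply (deriv_of_const _ 1) in D; [|intros; apply Hsp].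
    pose proof (dot_sym (g s) (dcurve g s)); lra. }
  assert (TA : forall s, dot (dcurve g s) (dcurve (dcurve g) s) = 0).
  { intros s. pose proof (vder_dot _ _ _ _ s DT DT) as D.
    apply (deriv_of_const _ 1) in D; [|intros; apply Hal].
    pose proof (dot_sym (dcurve g s) (dcurve (dcurve g) s)); lra. }
  intros s; split; [|split]; auto.
  pose proof (vder_dot _ _ _ _ s Dg DT) as D.
  apply (deriv_of_const _ 0) in D; [|intros; apply gT].
  rewrite Hal in D. lra.
Qed.

Lemma acc_decomp g : smooth_curve g -> on_sphere g -> arclength g -> forall s,
  dcurve (dcurve g) s = comb3 (-1) (g s) 0 (dcurve g s) (geod_curv g s) (normal g s).
Proof.
  intros Hs Hsp Hal s. destruct (frame_facts g Hs Hsp Hal s) as [gT [TA gA]].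
  rewrite (decomp (g s) (dcurve g s) (dcurve (dcurve g) s)) at 1; auto.
  rewrite (dot_sym (dcurve (dcurve g) s) (g s)), gA, (dot_sym (dcurve (dcurve g) s) (dcurve g s)), TA. reflexivity.
Qed.

Lemma vder_T2 g : smooth_curve g -> on_sphere g -> arclength g ->
  vder (dcurve g) (fun s => comb3 (-1) (g s) 0 (dcurve g s) (geod_curv g s) (normal g s)).
Proof.
  intros Hs Hsp Hal. eapply vder_ext_r; [apply vder_T; auto|].
  apply acc_decomp; auto.
Qed.

Lemma vder_N g : smooth_curve g -> on_sphere g -> arclength g ->
  vder (normal g) (fun s => vsc (- geod_curv g s) (dcurve g s)).
Proof.
  intros Hs Hsp Hal.
  eapply vder_ext_r.
  - apply (vder_cross g (dcurve g) (dcurve g) (dcurve (dcurve g))); [apply vder_g|apply vder_T]; auto.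
  - intros s. simpl. rewrite acc_decomp; auto.
    destruct (frame_facts g Hs Hsp Hal s) as [gT _].
    apply cross_g_comb; auto.
Qed.

Lemma frame_orth g : smooth_curve g -> on_sphere g -> arclength g -> forall s,
  dot (g s) (g s) = 1 /\ dot (dcurve g s) (dcurve g s) = 1 /\ dot (normal g s) (normal g s) = 1 /\
  dot (g s) (dcurve g s) = 0 /\ dot (g s) (normal g s) = 0 /\ dot (dcurve g s) (normal g s) = 0.
Proof.
  intros Hs Hsp Hal s. destruct (frame_facts g Hs Hsp Hal s) as [gT _].
  unfold normal, tangent. rewrite lagrange, Hsp, Hal, gT.
  rewrite (dot_sym (g s)), cross_dot_l, (dot_sym (dcurve g s)), cross_dot_r.
  repeat split; auto; ring.
Qed.

Definition CinfV (U : R -> v3) := Cinf (fun t => cx (U t)) /\ Cinf (fun t => cy (U t)) /\ Cinf (fun t => cz (U t)).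

Lemma Cinf_dot U V : CinfV U -> CinfV V -> Cinf (fun t => dot (U t) (V t)).
Proof.
  intros [A [B C]] [D [E F]]. unfold dot.
  repeat apply Cinf_plus; apply Cinf_mult; auto.
Qed.
Lemma CinfV_cross U V : CinfV U -> CinfV V -> CinfV (fun t => cross (U t) (V t)).
Proof.
  intros [A [B C]] [D [E F]]. unfold cross, CinfV, cx, cy, cz in *; simpl.
  split; [|split]; apply Cinf_minus; apply Cinf_mult; auto.
Qed.

Lemma Cinf_k g : smooth_curve g -> Cinf (geod_curv g).
Proof.
  intros Hs. destruct (Cinf_T g Hs) as [A [B C]].
  assert (CinfV (dcurve (dcurve g))).
  { unfold CinfV, dcurve, cx, cy, cz in *; simpl in *. split; [|split]; apply Cinf_Derive; auto. }
  unfold geod_curv. apply Cinf_dot; auto. unfold normal, tangent. apply CinfV_cross.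
  - apply smooth_Cinf; auto.
  - split; auto.
Qed.

Lemma isd_rpow (f : R -> R) s d c : is_derive f s d -> 0 < f s ->
  is_derive (fun t => Rpower (f t) c) s (c * Rpower (f s) (c - 1) * d).
Proof.
  intros H P.
  eapply isd_val.
  - apply (is_derive_comp (fun x => Rpower x c) f s); [|exact H].
    apply is_derive_Reals. apply derivable_pt_lim_power; auto.
  - unfold scal; simpl; unfold mult; simpl. rring.
Qed.

Lemma rpow_S x c : 0 < x -> Rpower x (c + 1) = Rpower x c * x.
Proof. intros; rewrite Rpower_plus, Rpower_1; auto. Qed.
Lemma rpow_2 x c : Rpower x (2 * c) = Rpower x c ^ 2.
Proof. replace (2 * c) with (c + c) by ring. rewrite Rpower_plus; ring. Qed.
Lemma rpow_pos x c : 0 < Rpower x c.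
Proof. unfold Rpower; apply exp_pos. Qed.
Lemma rpow_e x c d : c = d -> Rpower x c = Rpower x d.
Proof. intros ->; auto. Qed.

Definition uu (p : R) (k : R -> R) := fun t => Rpower (k t) (p - 1).
Definition u1 (p : R) (k : R -> R) := fun t => (p - 1) * Rpower (k t) (p - 2) * Derive k t.

Lemma isd_uu p k s : Cinf k -> (forall t, 0 < k t) -> is_derive (uu p k) s (u1 p k s).
Proof.
  intros Ck Pk. eapply isd_val.
  - apply isd_rpow; auto. apply Derive_correct, Cinf_ex; auto.
  - unfold u1. rewrite (rpow_e _ (p - 1 - 1) (p - 2)); [ring|ring].
Qed.

Lemma Derive_uu p k : Cinf k -> (forall t, 0 < k t) -> Derive (uu p k) = u1 p k.
Proof. intros. apply functional_extensionality; intros; apply is_derive_unique, isd_uu; auto. Qed.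

Lemma ex_u1 p k s : Cinf k -> (forall t, 0 < k t) -> ex_derive (u1 p k) s.
Proof.
  intros Ck Pk. unfold u1. eexists.
  apply isd_mult; [apply isd_mult; [apply isd_const|]|].
  - apply isd_rpow; auto. apply Derive_correct, Cinf_ex; auto.
  - apply Derive_correct, Cinf_ex, Cinf_Derive; auto.
Qed.

Lemma isd_kp k s c : Cinf k -> (forall t, 0 < k t) ->
  is_derive (fun t => Rpower (k t) c) s (c * Rpower (k s) (c - 1) * Derive k s).
Proof. intros. apply isd_rpow; auto. apply Derive_correct, Cinf_ex; auto. Qed.

Lemma vder_comb3 a a' U U' b b' V V' c c' W W' :
  (forall s, is_derive a s (a' s)) -> (forall s, is_derive b s (b' s)) -> (forall s, is_derive c s (c' s)) ->
  vder U U' -> vder V V' -> vder W W' ->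
  vder (fun t => comb3 (a t) (U t) (b t) (V t) (c t) (W t))
    (fun s => vadd (vadd (vadd (vsc (a' s) (U s)) (vsc (a s) (U' s))) (vadd (vsc (b' s) (V s)) (vsc (b s) (V' s))))
                   (vadd (vsc (c' s) (W s)) (vsc (c s) (W' s)))).
Proof.
  intros.
  apply (vder_add (fun t => vadd (vsc (a t) (U t)) (vsc (b t) (V t))) _ (fun t => vsc (c t) (W t))).
  - apply (vder_add (fun t => vsc (a t) (U t)) _ (fun t => vsc (b t) (V t))); apply vder_sc; auto.
  - apply vder_sc; auto.
Qed.

Definition Jf (p : R) (g : R -> v3) : R -> v3 := fun t =>
  comb3 (p * uu p (geod_curv g) t) (g t) (p * u1 p (geod_curv g) t) (dcurve g t)
        ((1 - p) * Rpower (geod_curv g t) p) (normal g t).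

Lemma J_form (G T N : v3) (a a' b b' c c' k : R) :
  vadd (vadd (vadd (vsc a' G) (vsc a T)) (vadd (vsc b' T) (vsc b (comb3 (-1) G 0 T k N))))
       (vadd (vsc c' N) (vsc c (vsc (- k) T)))
  = comb3 (a' - b) G (a + b' - c * k) T (b * k + c') N.
Proof. veq. Qed.

Lemma comb3_0 (G T N : v3) : comb3 0 G 0 T 0 N = v0.
Proof. veq. Qed.

Lemma Derive_n2_uu p g s : p_elastic p g ->
  Derive_n (fun t => Rpower (geod_curv g t) (p - 1)) 2 s = Derive (u1 p (geod_curv g)) s.
Proof.
  intros [Hs [Hsp [Hal [Hcv Hode]]]].
  change (Derive (Derive (uu p (geod_curv g))) s = Derive (u1 p (geod_curv g)) s).
  rewrite Derive_uu; auto. apply Cinf_k; auto.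
Qed.

Lemma J_const p g : p_elastic p g -> forall s, Jf p g s = Jf p g 0.
Proof.
  intros He. pose proof He as [Hs [Hsp [Hal [Hcv Hode]]]].
  assert (Ck : Cinf (geod_curv g)) by (apply Cinf_k; auto).
  assert (Pk : forall t, 0 < geod_curv g t) by exact Hcv.
  apply vder0_const. unfold Jf.
  eapply vder_ext_r.
  - apply (vder_comb3 (fun t => p * uu p (geod_curv g) t) (fun s => p * u1 p (geod_curv g) s) g (dcurve g)
                      (fun t => p * u1 p (geod_curv g) t) (fun s => p * Derive (u1 p (geod_curv g)) s) (dcurve g) (fun s => comb3 (-1) (g s) 0 (dcurve g s) (geod_curv g s) (normal g s))
                      (fun t => (1 - p) * Rpower (geod_curv g t) p)
                      (fun s => (1 - p) * (p * Rpower (geod_curv g s) (p - 1) * Derive (geod_curv g) s)) (normal g) (fun s => vsc (- geod_curv g s) (dcurve g s))).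
    + intros s; apply is_derive_scal, isd_uu; auto.
    + intros s; apply is_derive_scal, Derive_correct, ex_u1; auto.
    + intros s; apply is_derive_scal, isd_kp; auto.
    + apply vder_g; auto.
    + apply vder_T2; auto.
    + apply vder_N; auto.
  - intros s. cbv beta. rewrite J_form. rewrite <- (comb3_0 (g s) (dcurve g s) (normal g s)).
    pose proof (Hode s) as O. rewrite Derive_n2_uu in O; auto.
    set (k := geod_curv g) in *.
    assert (E1 : Rpower (k s) p * k s = Rpower (k s) (p + 1)) by (rewrite rpow_S; auto).
    assert (E2 : Rpower (k s) (p - 2) * k s = Rpower (k s) (p - 1)).
    { rewrite <- rpow_S; auto. apply rpow_e; ring. }
    unfold uu. f_equal.
    + ring.
    + rewrite <- E1 in O. lra.
    + unfold u1. rewrite <- E2. ring.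
Qed.

Lemma a_star_pos p : 0 < a_star p.
Proof. unfold a_star. apply Rmult_lt_0_compat; apply rpow_pos. Qed.

Lemma J_dots p g : p_elastic p g -> forall s,
  dot (g s) (Jf p g s) = p * uu p (geod_curv g) s /\
  dot (dcurve g s) (Jf p g s) = p * u1 p (geod_curv g) s /\
  dot (normal g s) (Jf p g s) = (1 - p) * Rpower (geod_curv g s) p.
Proof.
  intros [Hs [Hsp [Hal _]]] s.
  destruct (frame_orth g Hs Hsp Hal s) as [O1 [O2 [O3 [O4 [O5 O6]]]]].
  unfold Jf. rewrite !dot_comb3_r.
  rewrite O1, O2, O3, O4, O5, O6, (dot_sym (dcurve g s) (g s)), (dot_sym (normal g s) (g s)),
    (dot_sym (normal g s) (dcurve g s)), O4, O5, O6.
  repeat split; ring.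
Qed.

Lemma J_norm p a g : p_elastic p g -> first_integral p a (geod_curv g) -> forall s,
  dot (Jf p g s) (Jf p g s) = a.
Proof.
  intros He Hfi s. pose proof He as [Hs [Hsp [Hal _]]].
  destruct (J_dots p g He s) as [D1 [D2 D3]].
  assert (HJ : Jf p g s = comb3 (p * uu p (geod_curv g) s) (g s) (p * u1 p (geod_curv g) s) (dcurve g s)
        ((1 - p) * Rpower (geod_curv g s) p) (normal g s)) by reflexivity.
  rewrite HJ at 1. rewrite dot_comb3.
  rewrite D1, D2, D3. rewrite <- (Hfi s).
  unfold uu, u1. rewrite !rpow_2.
  replace (Rpower (geod_curv g s) (2 * p)) with (Rpower (geod_curv g s) p ^ 2) by (symmetry; apply rpow_2).
  ring.
Qed.

Lemma isd_cos th s w : is_derive th s w -> is_derive (fun t => cos (th t)) s (- sin (th s) * w).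
Proof.
  intros H. eapply isd_val.
  - apply (is_derive_comp cos th s); [|exact H]. apply is_derive_Reals, derivable_pt_lim_cos.
  - unfold scal; simpl; unfold mult; simpl. rring.
Qed.
Lemma isd_sin th s w : is_derive th s w -> is_derive (fun t => sin (th t)) s (cos (th s) * w).
Proof.
  intros H. eapply isd_val.
  - apply (is_derive_comp sin th s); [|exact H]. apply is_derive_Reals, derivable_pt_lim_sin.
  - unfold scal; simpl; unfold mult; simpl. rring.
Qed.

Lemma q_alg (G T e : v3) (h i i' h' : R) :
  dot (vadd (vsc i' (vsub G (vsc h e))) (vsc i (vsub T (vadd (vsc h' e) (vsc h v0)))))
      (cross e (vsc i (vsub G (vsc h e)))) = i * i * dot (cross G T) e.
Proof. veq. Qed.

Lemma m_alg (e u0 : v3) (c s w : R) : dot e e = 1 -> dot e u0 = 0 ->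
  vadd (vadd (vsc (- s * w) u0) (vsc c v0)) (vadd (vsc (c * w) (cross e u0)) (vsc s v0)) =
  vsc w (cross e (vadd (vsc c u0) (vsc s (cross e u0)))).
Proof.
  intros H1 H2.
  transitivity (vadd (vsc (- s * w) (vsc (dot e e) u0)) (vadd (vsc (c * w) (cross e u0)) (vsc (s * w) (vsc (dot e u0) e)))).
  - rewrite H1, H2. veq.
  - veq.
Qed.

Lemma qn_alg (G e : v3) (i h : R) : dot (vsc i (vsub G (vsc h e))) (vsc i (vsub G (vsc h e))) =
  i * i * (dot G G - 2 * h * dot G e + h * h * dot e e).
Proof. veq. Qed.

Lemma comb3_rot (e q Q : v3) (w : R) : comb3 0 e 0 q w (cross e q) = vsc w (cross e q).
Proof. veq. Qed.
Lemma m0_alg (u x : v3) : vsub u (vadd (vsc 1 u) (vsc 0 x)) = v0.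
Proof. veq. Qed.
Lemma dot_v0 (u : v3) : dot u v0 = 0.
Proof. veq. Qed.
Lemma vsc_vsc (r i : R) (X : v3) : vsc r (vsc i X) = vsc (r * i) X.
Proof. veq. Qed.
Lemma vsc_1 (X : v3) : vsc 1 X = X.
Proof. veq. Qed.
Lemma recomp (G e : v3) (h : R) : G = vadd (vsc h e) (vsub G (vsc h e)).
Proof. veq. Qed.

Lemma D_alg (q m e : v3) (w : R) : dot (vsub (vsc w (cross e q)) (vsc w (cross e m))) (vsub q m) = 0.
Proof. veq. Qed.

Lemma vsub_0 (u v : v3) : vsub u v = v0 -> u = v.
Proof. intros H. destruct u as [[? ?] ?], v as [[? ?] ?]. unfold vsub, v0, cx, cy, cz in H; simpl in H.
  injection H; intros. f_equal; [f_equal|]; lra. Qed.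

Lemma rotation g e th : smooth_curve g -> on_sphere g -> arclength g -> dot e e = 1 ->
  (forall s, dot (g s) e ^ 2 < 1) -> th 0 = 0 ->
  (forall s, is_derive th s (dot (normal g s) e / (1 - dot (g s) e ^ 2))) ->
  forall s, g s = vadd (vsc (dot (g s) e) e) (vsc (sqrt (1 - dot (g s) e ^ 2))
     (vadd (vsc (cos (th s)) (vsc (/ sqrt (1 - dot (g 0) e ^ 2)) (vsub (g 0) (vsc (dot (g 0) e) e))))
           (vsc (sin (th s)) (cross e (vsc (/ sqrt (1 - dot (g 0) e ^ 2)) (vsub (g 0) (vsc (dot (g 0) e) e))))))).
Proof.
  intros Hs Hsp Hal He Hh Hth0 Hth.
  set (hh := fun t => dot (g t) e).
  set (rr := fun t => sqrt (1 - hh t ^ 2)).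
  set (ir := fun t => / rr t).
  set (qq := fun t => vsc (ir t) (vsub (g t) (vsc (hh t) e))).
  set (u0 := qq 0).
  set (m := fun t => vadd (vsc (cos (th t)) u0) (vsc (sin (th t)) (cross e u0))).
  set (w := fun s => dot (normal g s) e / (1 - hh s ^ 2)).
  pose proof (vder_g g Hs) as Dg.
  assert (Dh : forall s, is_derive hh s (dot (dcurve g s) e)).
  { intros s. eapply isd_val. apply (vder_dot g (dcurve g) (fun _ => e) (fun _ => v0) s Dg (vder_const e)).
    unfold dot, v0, cx, cy, cz; simpl; ring. }
  assert (P1 : forall s, 0 < 1 - hh s ^ 2) by (intros s; unfold hh; specialize (Hh s); lra).
  assert (Prr : forall s, 0 < rr s) by (intros; apply sqrt_lt_R0; auto).
  assert (Drr : forall s, ex_derive rr s).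
  { intros s. eexists. apply is_derive_sqrt; [|auto].
    apply isd_minus; [apply isd_const|]. 
    apply (isd_ext (fun t => hh t * hh t)); [intros; simpl; ring|].
    apply isd_mult; apply Dh. }
  assert (Dir : forall s, is_derive ir s (Derive ir s)).
  { intros s. apply Derive_correct. eexists. apply is_derive_inv.
    - apply Derive_correct, Drr.
    - apply Rgt_not_eq, Prr. }
  set (Q' := fun s => vadd (vsc (Derive ir s) (vsub (g s) (vsc (hh s) e)))
                  (vsc (ir s) (vsub (dcurve g s) (vadd (vsc (dot (dcurve g s) e) e) (vsc (hh s) v0))))).
  assert (Dqq : vder qq Q').
  { apply vder_sc; auto. apply vder_sub; auto. apply vder_sc; auto. apply vder_const. }
  assert (ir2 : forall s, ir s * ir s = / (1 - hh s ^ 2)).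
  { intros s. unfold ir, rr. rewrite <- Rinv_mult, sqrt_sqrt; auto. specialize (P1 s); lra. }
  assert (qe : forall s, dot (qq s) e = 0).
  { intros s. unfold qq. rewrite dot_vsc, dot_vsub, dot_vsc, He. unfold hh. ring. }
  assert (qq1 : forall s, dot (qq s) (qq s) = 1).
  { intros s. unfold qq. rewrite qn_alg, ir2, He, Hsp. fold (hh s). specialize (P1 s). field. lra. }
  assert (Dq2 : vder qq (fun s => vsc (w s) (cross e (qq s)))).
  { eapply vder_ext_r; [exact Dqq|]. intros s.
    assert (E1 : dot (Q' s) e = 0).
    { pose proof (vder_dot qq Q' (fun _ => e) (fun _ => v0) s Dqq (vder_const e)) as D.
      apply (deriv_of_const _ 0) in D; [|intros; apply qe]. rewrite dot_v0 in D. lra. }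
    assert (E2 : dot (Q' s) (qq s) = 0).
    { pose proof (vder_dot qq Q' qq Q' s Dqq Dqq) as D.
      apply (deriv_of_const _ 1) in D; [|intros; apply qq1]. rewrite (dot_sym (qq s)) in D. lra. }
    assert (E3 : dot (Q' s) (cross e (qq s)) = w s).
    { unfold Q', qq. rewrite q_alg, ir2. unfold w. unfold normal, tangent. field.
      specialize (P1 s); lra. }
    rewrite (decomp e (qq s) (Q' s)); auto.
    - rewrite E1, E2, E3. apply comb3_rot; auto.
    - rewrite dot_sym; auto. }
  assert (u0e : dot e u0 = 0) by (unfold u0; rewrite dot_sym; apply qe).
  assert (Dm : vder m (fun s => vsc (w s) (cross e (m s)))).
  { eapply vder_ext_r.
    - apply (vder_add (fun t => vsc (cos (th t)) u0) (fun s => vadd (vsc (- sin (th s) * w s) u0) (vsc (cos (th s)) v0))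
                      (fun t => vsc (sin (th t)) (cross e u0)) (fun s => vadd (vsc (cos (th s) * w s) (cross e u0)) (vsc (sin (th s)) v0))).
      + apply (vder_sc (fun t => cos (th t)) (fun s => - sin (th s) * w s) (fun _ => u0) (fun _ => v0)).
        * intros s; apply isd_cos, Hth.
        * apply vder_const.
      + apply (vder_sc (fun t => sin (th t)) (fun s => cos (th s) * w s) (fun _ => cross e u0) (fun _ => v0)).
        * intros s; apply isd_sin, Hth.
        * apply vder_const.
    - intros s; cbv beta. apply m_alg; auto. }
  assert (Dd : forall s, is_derive (fun t => dot (vsub (qq t) (m t)) (vsub (qq t) (m t))) s 0).
  { intros s. eapply isd_val.
    - apply vder_dot; apply vder_sub; eauto.
    - cbv beta. rewrite D_alg, dot_sym, D_alg. ring. }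
  assert (Eq : forall s, qq s = m s).
  { intros s. apply vsub_0, dot_self_0.
    rewrite (deriv0_const _ Dd s 0). unfold m. fold u0. rewrite Hth0, cos_0, sin_0.
    rewrite m0_alg. apply dot_v0. }
  intros s.
  change (g s = vadd (vsc (hh s) e) (vsc (rr s) (m s))).
  rewrite <- Eq. unfold qq. rewrite vsc_vsc. unfold ir. rewrite Rinv_r; [|apply Rgt_not_eq, Prr].
  rewrite vsc_1. apply recomp.
Qed.

Definition f0 (p a : R) (k : R -> R) := fun s => Rpower (k s) (2 - p) / (a * Rpower (k s) (2 * (1 - p)) - p ^ 2).
Definition theta (p a : R) (k : R -> R) := fun s => (1 - p) * sqrt a * RInt (f0 p a k) 0 s.

Lemma key_ineq p a g : 0 < p < 1 -> p_elastic p g -> first_integral p a (geod_curv g) -> forall s,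
  p ^ 2 * uu p (geod_curv g) s ^ 2 < a.
Proof.
  intros Hp He Hfi s. pose proof (J_norm p a g He Hfi s) as N.
  destruct (J_dots p g He s) as [D1 [D2 D3]].
  assert (HJ : Jf p g s = comb3 (p * uu p (geod_curv g) s) (g s) (p * u1 p (geod_curv g) s) (dcurve g s)
        ((1 - p) * Rpower (geod_curv g s) p) (normal g s)) by reflexivity.
  rewrite HJ in N at 1. rewrite dot_comb3, D1, D2, D3 in N.
  pose proof (rpow_pos (geod_curv g s) p).
  assert (0 < (1 - p) * Rpower (geod_curv g s) p) by (apply Rmult_lt_0_compat; lra).
  nra.
Qed.

Lemma denom_pos p a k s : 0 < k s -> p ^ 2 * uu p k s ^ 2 < a ->
  0 < a * Rpower (k s) (2 * (1 - p)) - p ^ 2 /\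
  a * Rpower (k s) (2 * (1 - p)) - p ^ 2 = Rpower (k s) (2 * (1 - p)) * (a - p ^ 2 * uu p k s ^ 2).
Proof.
  intros Pk H.
  assert (E : Rpower (k s) (2 * (1 - p)) * uu p k s ^ 2 = 1).
  { unfold uu. rewrite <- rpow_2, <- Rpower_plus. rewrite (rpow_e _ _ 0); [apply Rpower_O; auto|ring]. }
  assert (E2 : a * Rpower (k s) (2 * (1 - p)) - p ^ 2 = Rpower (k s) (2 * (1 - p)) * (a - p ^ 2 * uu p k s ^ 2)).
  { transitivity (a * Rpower (k s) (2 * (1 - p)) - p ^ 2 * (Rpower (k s) (2 * (1 - p)) * uu p k s ^ 2)).
    - rewrite E; ring.
    - ring. }
  split; auto. rewrite E2. apply Rmult_lt_0_compat; [apply rpow_pos|lra].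
Qed.

Lemma f0_deriv p a g s : 0 < p < 1 -> p_elastic p g -> first_integral p a (geod_curv g) ->
  ex_derive (f0 p a (geod_curv g)) s.
Proof.
  intros Hp He Hfi. pose proof He as [Hs [_ [_ [Hcv _]]]].
  assert (Ck : Cinf (geod_curv g)) by (apply Cinf_k; auto).
  destruct (denom_pos p a (geod_curv g) s (Hcv s) (key_ineq p a g Hp He Hfi s)) as [D _].
  eexists. unfold f0. apply is_derive_div.
  - apply isd_kp; auto.
  - apply isd_minus; [|apply isd_const]. apply is_derive_scal, isd_kp; auto.
  - lra.
Qed.

Lemma theta_deriv p a g s : 0 < p < 1 -> p_elastic p g -> first_integral p a (geod_curv g) ->
  is_derive (theta p a (geod_curv g)) s ((1 - p) * sqrt a * f0 p a (geod_curv g) s).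
Proof.
  intros Hp He Hfi. unfold theta. apply is_derive_scal.
  apply (is_derive_RInt (f0 p a (geod_curv g)) (fun x => RInt (f0 p a (geod_curv g)) 0 x) 0).
  - apply filter_forall. intros b. apply (@RInt_correct R_CompleteNormedModule). apply (@ex_RInt_continuous R_CompleteNormedModule).
    intros z _. apply (@ex_derive_continuous R_AbsRing R_NormedModule), f0_deriv; auto.
  - apply (@ex_derive_continuous R_AbsRing R_NormedModule), f0_deriv; auto.
Qed.

Lemma theta_0 p a k : theta p a k 0 = 0.
Proof. unfold theta. rewrite RInt_point. unfold zero; simpl. ring. Qed.

Lemma div_sqrt_sq x y : 0 < y -> (x / sqrt y) ^ 2 = x ^ 2 / y.
Proof.
  intros H. assert (E : sqrt y ^ 2 = y) by (simpl; rewrite Rmult_1_r; apply sqrt_sqrt; lra).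
  assert (sqrt y > 0) by (apply sqrt_lt_R0; auto).
  replace (x ^ 2 / y) with (x ^ 2 / (sqrt y ^ 2)) by (rewrite E; auto). field. lra.
Qed.

Lemma div_sqrt_frac X M a : 0 < a -> M <> 0 -> X / sqrt a / (M / a) = sqrt a * X / M.
Proof.
  intros Ha HM. assert (sqrt a > 0) by (apply sqrt_lt_R0; auto).
  rewrite <- (sqrt_sqrt a) at 2 by lra. field. lra.
Qed.

Definition evec (p a : R) (g : R -> v3) := vsc (/ sqrt a) (Jf p g 0).

Lemma evec_facts p a g : 0 < p < 1 -> a_star p < a -> p_elastic p g -> first_integral p a (geod_curv g) ->
  dot (evec p a g) (evec p a g) = 1 /\
  (forall s, dot (g s) (evec p a g) = p * uu p (geod_curv g) s / sqrt a) /\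
  (forall s, dot (normal g s) (evec p a g) = (1 - p) * Rpower (geod_curv g s) p / sqrt a).
Proof.
  intros Hp Ha He Hfi.
  assert (a0 : 0 < a) by (pose proof (a_star_pos p); lra).
  assert (sa : 0 < sqrt a) by (apply sqrt_lt_R0; auto).
  assert (sa2 : sqrt a * sqrt a = a) by (apply sqrt_sqrt; lra).
  unfold evec. split; [|split].
  - rewrite dot_vsc, (dot_sym (Jf p g 0)), dot_vsc, J_norm with (a := a); auto.
    replace (/ sqrt a * (/ sqrt a * a)) with ((1 / sqrt a) ^ 2 * a) by (field; lra).
    rewrite div_sqrt_sq; auto. field; lra.
  - intros s. rewrite (dot_sym (g s)), dot_vsc, (dot_sym (Jf p g 0)), <- (J_const p g He s).
    destruct (J_dots p g He s) as [D1 _]. rewrite D1. field. lra.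
  - intros s. rewrite (dot_sym (normal g s)), dot_vsc, (dot_sym (Jf p g 0)), <- (J_const p g He s).
    destruct (J_dots p g He s) as [_ [_ D3]]. rewrite D3. field. lra.
Qed.

Lemma rep p a g : 0 < p < 1 -> a_star p < a -> p_elastic p g -> first_integral p a (geod_curv g) ->
  forall s, g s = vadd (vsc (dot (g s) (evec p a g)) (evec p a g)) (vsc (sqrt (1 - dot (g s) (evec p a g) ^ 2))
     (vadd (vsc (cos (theta p a (geod_curv g) s)) (vsc (/ sqrt (1 - dot (g 0) (evec p a g) ^ 2)) (vsub (g 0) (vsc (dot (g 0) (evec p a g)) (evec p a g)))))
           (vsc (sin (theta p a (geod_curv g) s)) (cross (evec p a g) (vsc (/ sqrt (1 - dot (g 0) (evec p a g) ^ 2)) (vsub (g 0) (vsc (dot (g 0) (evec p a g)) (evec p a g)))))))).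
Proof.
  intros Hp Ha He Hfi.
  pose proof He as [Hs [Hsp [Hal [Hcv _]]]].
  destruct (evec_facts p a g Hp Ha He Hfi) as [E1 [E2 E3]].
  assert (a0 : 0 < a) by (pose proof (a_star_pos p); lra).
  assert (sa : 0 < sqrt a) by (apply sqrt_lt_R0; auto).
  assert (sa2 : sqrt a * sqrt a = a) by (apply sqrt_sqrt; lra).
  assert (Hh : forall s, dot (g s) (evec p a g) ^ 2 < 1).
  { intros s. rewrite E2. pose proof (key_ineq p a g Hp He Hfi s).
    replace ((p * uu p (geod_curv g) s / sqrt a) ^ 2) with (p ^ 2 * uu p (geod_curv g) s ^ 2 / a).
    - apply (Rmult_lt_reg_r a); [lra|]. field_simplify; lra.
    - rewrite div_sqrt_sq; auto. field. lra. }
  apply rotation; auto.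
  - apply theta_0.
  - intros s. eapply isd_val; [apply theta_deriv; auto|].
    match goal with |- ?x = ?y => change (@eq R x y) end.
    rewrite E2, E3.
    set (k := geod_curv g) in *.
    pose proof (key_ineq p a g Hp He Hfi s) as K. change (p ^ 2 * uu p k s ^ 2 < a) in K.
    destruct (denom_pos p a k s (Hcv s) K) as [D1 D2].
    unfold f0. rewrite D2.
    assert (W : Rpower (k s) (2 - p) = Rpower (k s) p * Rpower (k s) (2 * (1 - p))).
    { rewrite <- Rpower_plus. apply rpow_e; ring. }
    rewrite W.
    pose proof (rpow_pos (k s) (2 * (1 - p))).
    assert (Q : (a - p ^ 2 * uu p k s ^ 2) / a = 1 - (p * uu p k s / sqrt a) ^ 2).
    { rewrite div_sqrt_sq; auto. field. lra. }
    rewrite <- Q.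
    rewrite div_sqrt_frac by lra. field. repeat split; lra.
Qed.

Lemma Derive_shift (f : R -> R) L s : ex_derive f (s + L) -> Derive (fun t => f (t + L)) s = Derive f (s + L).
Proof.
  intros H. apply is_derive_unique. eapply isd_val.
  - apply (is_derive_comp f (fun t => t + L) s).
    + apply Derive_correct; exact H.
    + apply isd_plus; [apply (is_derive_id (K := R_AbsRing))|apply isd_const].
  - unfold scal, one; simpl; unfold mult; simpl. rring.
Qed.

Lemma Derive_per (f : R -> R) L s : (forall t, f (t + L) = f t) -> ex_derive f (s + L) ->
  Derive f (s + L) = Derive f s.
Proof. intros P H. rewrite <- Derive_shift; auto. apply Derive_ext; auto. Qed.

Lemma dcurve_per (G : R -> v3) L : (forall t, G (t + L) = G t) ->
  (forall t, ex_derive (fun t => cx (G t)) t) -> (forall t, ex_derive (fun t => cy (G t)) t) ->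
  (forall t, ex_derive (fun t => cz (G t)) t) -> forall s, dcurve G (s + L) = dcurve G s.
Proof.
  intros P H1 H2 H3 s. unfold dcurve.
  rewrite (Derive_per (fun t => cx (G t))), (Derive_per (fun t => cy (G t))), (Derive_per (fun t => cz (G t))); auto;
  intros; rewrite P; auto.
Qed.

Lemma k_per g L : smooth_curve g -> (forall t, g (t + L) = g t) -> forall s, geod_curv g (s + L) = geod_curv g s.
Proof.
  intros Hs P s.
  destruct (smooth_Cinf g Hs) as [A [B C]]. destruct (Cinf_T g Hs) as [D [E F]].
  assert (P1 : forall t, dcurve g (t + L) = dcurve g t).
  { apply dcurve_per; auto; intros; apply Cinf_ex; auto. }
  assert (P2 : forall t, dcurve (dcurve g) (t + L) = dcurve (dcurve g) t).
  { apply dcurve_per; auto; intros; apply Cinf_ex; auto. }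
  unfold geod_curv, normal, tangent. rewrite P, P1, P2. auto.
Qed.

Lemma per_nat (f : R -> R) rho : (forall t, f (t + rho) = f t) -> forall n t, f (t + INR n * rho) = f t.
Proof.
  intros P n. induction n; intros t.
  - simpl. rewrite Rmult_0_l, Rplus_0_r; auto.
  - rewrite S_INR. replace (t + (INR n + 1) * rho) with ((t + INR n * rho) + rho) by ring.
    rewrite P; auto.
Qed.

Lemma theta_shift p a g L : 0 < p < 1 -> p_elastic p g -> first_integral p a (geod_curv g) ->
  (forall t, geod_curv g (t + L) = geod_curv g t) ->
  forall s, theta p a (geod_curv g) (s + L) = theta p a (geod_curv g) s + theta p a (geod_curv g) L.
Proof.
  intros Hp He Hfi P s.
  set (th := theta p a (geod_curv g)).
  assert (D : forall s, is_derive (fun t => th (t + L) - th t) s 0).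
  { intros u. eapply isd_val.
    - apply isd_minus; [|apply theta_deriv; auto].
      eapply isd_val.
      + apply (is_derive_comp th (fun t => t + L) u); [apply theta_deriv; auto|].
        apply isd_plus; [apply (is_derive_id (K := R_AbsRing))|apply isd_const].
      + reflexivity.
    - unfold scal, one; simpl; unfold mult; simpl. unfold f0. rewrite P. rring. }
  pose proof (deriv0_const _ D s 0) as E. simpl in E.
  rewrite Rplus_0_l in E. unfold th in E. rewrite theta_0 in E. unfold th. lra.
Qed.

Lemma theta_nat p a g rho : 0 < p < 1 -> p_elastic p g -> first_integral p a (geod_curv g) ->
  (forall t, geod_curv g (t + rho) = geod_curv g t) ->
  forall n, theta p a (geod_curv g) (INR n * rho) = INR n * theta p a (geod_curv g) rho.
Proof.
  intros Hp He Hfi P n. induction n.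
  - simpl. rewrite Rmult_0_l, theta_0. ring.
  - rewrite S_INR. replace ((INR n + 1) * rho) with (INR n * rho + rho) by ring.
    rewrite theta_shift; auto. rewrite IHn. ring.
Qed.

Lemma period_multiple (f : R -> R) rho L : minimal_period f rho -> 0 < L -> (forall s, f (s + L) = f s) ->
  exists n : nat, (1 <= n)%nat /\ L = INR n * rho.
Proof.
  intros [Hr [Pr Mr]] HL PL.
  assert (Hx : 0 <= L / rho) by (apply Rlt_le, Rdiv_lt_0_compat; auto).
  destruct (nfloor_ex (L / rho) Hx) as [n [N1 N2]].
  assert (T1 : INR n * rho <= L).
  { apply (Rmult_le_compat_r rho) in N1; [|lra]. unfold Rdiv in N1. rewrite Rmult_assoc, Rinv_l in N1; lra. }
  assert (T2 : L < INR n * rho + rho).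
  { apply (Rmult_lt_compat_r rho) in N2; [|lra]. unfold Rdiv in N2. rewrite Rmult_assoc, Rinv_l in N2; lra. }
  assert (Et : L = INR n * rho).
  { destruct (Rle_lt_or_eq_dec _ _ T1) as [Hlt|Heq]; auto.
    exfalso. destruct (Mr (L - INR n * rho)) as [s Hs]; [lra|].
    apply Hs. rewrite <- (per_nat f rho Pr n (s + (L - INR n * rho))).
    replace (s + (L - INR n * rho) + INR n * rho) with (s + L) by ring. auto. }
  exists n. split; auto. destruct n; [simpl in Et; lra|lia].
Qed.

Lemma rep_dot (E U : v3) h r c s' : dot E E = 1 -> dot E U = 0 -> dot U U = 1 ->
  dot (vadd (vsc h E) (vsc r (vadd (vsc c U) (vsc s' (cross E U))))) (cross E U) = r * s'.
Proof.
  intros H1 H2 H3.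
  rewrite dot_vadd, !dot_vsc, dot_vadd, !dot_vsc, lagrange, H1, H2, H3.
  rewrite (dot_sym E), cross_dot_l, (dot_sym U), cross_dot_r. ring.
Qed.

Lemma cos_2piz x z : cos (x + 2 * PI * IZR z) = cos x /\ sin (x + 2 * PI * IZR z) = sin x.
Proof.
  assert (S1 : sin (IZR z * PI) = 0) by (apply sin_eq_0_1; eauto).
  assert (S2 : sin (2 * PI * IZR z) = 0).
  { apply sin_eq_0_1. exists (2 * z)%Z. rewrite mult_IZR. ring. }
  assert (C2 : cos (2 * PI * IZR z) = 1).
  { replace (2 * PI * IZR z) with (2 * (IZR z * PI)) by ring. rewrite cos_2a_sin, S1. ring. }
  rewrite cos_plus, sin_plus, S2, C2. split; ring.
Qed.
From Stdlib Require Import ZArith.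

Lemma Hh_lemma p a g : 0 < p < 1 -> a_star p < a -> p_elastic p g -> first_integral p a (geod_curv g) ->
  forall s, dot (g s) (evec p a g) ^ 2 < 1.
Proof.
  intros Hp Ha He Hfi s.
  destruct (evec_facts p a g Hp Ha He Hfi) as [E1 [E2 E3]].
  assert (a0 : 0 < a) by (pose proof (a_star_pos p); lra).
  rewrite E2. pose proof (key_ineq p a g Hp He Hfi s).
  rewrite div_sqrt_sq; auto. apply (Rmult_lt_reg_r a); [lra|]. field_simplify; lra.
Qed.

Theorem mainTheorem6 (p a rho : R) (g : R -> v3) :
  0 < p < 1 ->
  a_star p < a ->
  p_elastic p g ->
  ~ (exists c : R, forall s, geod_curv g s = c) ->
  first_integral p a (geod_curv g) ->
  minimal_period (geod_curv g) rho ->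
  (closed_curve g <-> exists q : Q, Lambda p a rho (geod_curv g) = 2 * PI * Q2R q).
Proof.
  intros Hp Ha He Hnc Hfi Hmp.
  pose proof He as [Hs [Hsp [Hal [Hcv _]]]].
  destruct (evec_facts p a g Hp Ha He Hfi) as [E1 [E2 E3]].
  pose proof (rep p a g Hp Ha He Hfi) as Hrep.
  pose proof (Hh_lemma p a g Hp Ha He Hfi) as Hh.
  assert (Lam : Lambda p a rho (geod_curv g) = theta p a (geod_curv g) rho) by reflexivity.
  rewrite Lam.
  assert (Hper : forall t, geod_curv g (t + rho) = geod_curv g t) by (destruct Hmp as [_ [P _]]; auto).
  assert (Hrho : 0 < rho) by (destruct Hmp; auto).
  assert (HH : forall s1 s2, geod_curv g s1 = geod_curv g s2 -> dot (g s1) (evec p a g) = dot (g s2) (evec p a g)).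
  { intros s1 s2 Hk. rewrite !E2. unfold uu. rewrite Hk. auto. }
  set (E := evec p a g) in *.
  set (th := theta p a (geod_curv g)) in *.
  set (U := vsc (/ sqrt (1 - dot (g 0) E ^ 2)) (vsub (g 0) (vsc (dot (g 0) E) E))) in *.
  assert (P0 : 0 < 1 - dot (g 0) E ^ 2) by (specialize (Hh 0); lra).
  assert (EU : dot E U = 0).
  { unfold U. rewrite dot_sym, dot_vsc, dot_vsub, dot_vsc, E1. ring. }
  assert (UU : dot U U = 1).
  { unfold U. rewrite qn_alg, Hsp, E1.
    rewrite <- Rinv_mult, sqrt_sqrt by lra. field. lra. }
  split.
  - intros [L [HL Pg]].
    assert (kL : forall s, geod_curv g (s + L) = geod_curv g s) by (apply k_per; auto).
    destruct (period_multiple (geod_curv g) rho L Hmp HL kL) as [n [Hn EL]].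
    assert (gL : g L = g 0) by (rewrite <- (Rplus_0_l L); apply Pg).
    pose proof (rep_dot E U (dot (g L) E) (sqrt (1 - dot (g L) E ^ 2)) (cos (th L)) (sin (th L)) E1 EU UU) as A1.
    pose proof (rep_dot E U (dot (g 0) E) (sqrt (1 - dot (g 0) E ^ 2)) (cos (th 0)) (sin (th 0)) E1 EU UU) as A0.
    rewrite <- Hrep in A1, A0. rewrite gL, A0 in A1.
    unfold th in A1. rewrite theta_0, sin_0 in A1. fold th in A1.
    assert (PL : 0 < sqrt (1 - dot (g 0) E ^ 2)) by (apply sqrt_lt_R0; lra).
    assert (S0 : sin (th L) = 0) by nra.
    rewrite EL in S0. unfold th in S0. rewrite theta_nat in S0; auto. fold th in S0.
    destruct (sin_eq_0_0 _ S0) as [z Hz].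
    exists (Qmake z (Pos.of_nat (2 * n))).
    unfold Q2R; cbn [Qnum Qden].
    rewrite <- (positive_nat_Z (Pos.of_nat (2 * n))), <- (INR_IZR_INZ (Pos.to_nat (Pos.of_nat (2 * n)))), Nat2Pos.id by lia.
    rewrite mult_INR. simpl (INR 2).
    assert (0 < INR n) by (apply lt_0_INR; lia).
    apply (Rmult_eq_reg_l (INR n)); [|lra]. rewrite Hz. field. lra.
  - intros [q Hq].
    set (n := Pos.to_nat (Qden q)).
    assert (Hn : 0 < INR n) by apply pos_INR_nat_of_P.
    exists (INR n * rho). split; [apply Rmult_lt_0_compat; auto|].
    assert (kL : forall t, geod_curv g (t + INR n * rho) = geod_curv g t) by (apply per_nat; auto).
    assert (TL : th (INR n * rho) = 2 * PI * IZR (Qnum q)).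
    { unfold th. rewrite theta_nat; auto. fold th. rewrite Hq. unfold Q2R.
      replace (IZR (Z.pos (Qden q))) with (INR n).
      - field. lra.
      - unfold n. rewrite INR_IZR_INZ, positive_nat_Z. auto. }
    intros s.
    rewrite (Hrep (s + INR n * rho)), (Hrep s).
    rewrite (HH (s + INR n * rho) s (kL s)).
    unfold th at 1 2. rewrite theta_shift; auto. fold th. rewrite TL.
    destruct (cos_2piz (th s) (Qnum q)) as [C S]. rewrite C, S. reflexivity.
Qed.
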